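(* Let $G$ be a Lie group with identity element $e$, and for an integer $c$ let $\mu_c\colon G\to G$ be the power map $\mu_c(x)=x^c$. Then for any integers $a,b$, $\mathrm{D}(\mu_a,\mu_b)=\mathrm{D}(\mu_{a-b},e)$, where $e$ denotes the constant map $G\to G$ with value $e$.
   Context: For continuous maps $f,g\colon X\to Y$, the homotopic distance $\mathrm{D}(f,g)$ is the least integer $n\geq 0$ such that there is an open cover $\{U_0,\dots,U_n\}$ of $X$ with $f|_{U_j}\simeq g|_{U_j}$ for all $j$; if no such cover exists, $\mathrm{D}(f,g)=\infty$. *)

(* Defs.v *)
From HB Require Import structures.
From mathcomp Require Import all_boot all_order all_algebra.
From mathcomp Require Import all_classical all_reals all_analysis.
From mathcomp Require Import monoid.
From mathcomp Require Import Rstruct Rstruct_topology.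
From Stdlib Require Import Rdefinitions.

Set Implicit Arguments.
Unset Strict Implicit.
Unset Printing Implicit Defensive.

Import Order.TTheory.
Local Open Scope classical_set_scope.

HB.mixin Record isTopGroup G of Group G & Topological G := {
  mulg_continuous : continuous (fun p : G * G => (p.1 * p.2)%g);
  invg_continuous : continuous (fun x : G => (x^-1)%g)
}.

#[short(type="topGroupType")]
HB.structure Definition TopGroup :=
  {G of isTopGroup G & Group G & Topological G}.

Definition zpowg (G : groupType) (c : int) (x : G) : G :=
  match c with
  | Posz n => (x ^+ n)%g
  | Negz n => ((x ^+ n.+1)^-1)%g
  end.

Definition powmap (G : groupType) (c : int) : G -> G := zpowg c.

Definition unit_interval : set R := `[0%R, 1%R].

(* f|_U is homotopic to g|_U (as maps U -> Y, U with the subspace topology):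
   there is a map H : X * R -> Y whose restriction to U x [0,1] is continuous
   with H(x,0) = f x and H(x,1) = g x for x in U. *)
Definition homotopic_on (X Y : topologicalType) (U : set X) (f g : X -> Y) :=
  exists H : X * R -> Y,
    {within U `*` unit_interval, continuous H} /\
    (forall x, U x -> H (x, 0%R) = f x /\ H (x, 1%R) = g x).

Definition hdist_le (X Y : topologicalType) (f g : X -> Y) (n : nat) :=
  exists U : 'I_n.+1 -> set X,
    (forall j, open (U j)) /\ \bigcup_j U j = setT /\
    (forall j, homotopic_on (U j) f g).

(* Homotopic distance D(f,g) : [Some n] with n least such that hdist_le f g n,
   and [None] (= infinity) if no such cover exists. *)
Definition hdist (X Y : topologicalType) (f g : X -> Y) : option nat :=
  match pselect (exists n, hdist_le f g n) with
  | left H => Some (ex_minn (P := fun n => `[< hdist_le f g n >]) 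
                      (let: ex_intro n Hn := H in ex_intro _ n (asboolT Hn)))
  | right _ => None
  end.

(* Main.v *)
Require Import Defs.
From mathcomp Require Import all_boot all_order all_algebra.
From mathcomp Require Import all_classical all_reals all_analysis.
From mathcomp Require Import monoid.
From mathcomp Require Import zify.
Import GRing.Theory.
Local Open Scope group_scope.

Section Alg.
Variable G : groupType.
Implicit Types x : G.

Definition P x (m n : nat) := x ^+ m * (x ^+ n)^-1.

Lemma cXX x m n : commute (x ^+ m) (x ^+ n).
Proof. exact: commuteX2 (commute_refl x). Qed.

Lemma zpowg_sub x (m n : nat) : zpowg (m%:Z - n%:Z)%R x = P x m n.
Proof.
rewrite /P; case: (leqP n m) => hnm.
  rewrite subzn // /=; exact: expgnFr.
have -> : (m%:Z - n%:Z)%R = Negz (n - m).-1.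
  rewrite NegzE prednK ?subn_gt0 // -opprB subzn //; exact: ltnW.
rewrite /= prednK ?subn_gt0 //.
have -> : x ^+ n = x ^+ m * x ^+ (n - m) by rewrite -expgnDr subnKC // ltnW.
have cc : commute (x ^+ m) (x ^+ (n - m))^-1 by apply: commuteV; apply: cXX.
by rewrite invgM mulgA cc -mulgA mulgV mulg1.
Qed.

Lemma zpowg_rep (c : int) : exists m n : nat, c = (m%:Z - n%:Z)%R.
Proof.
case: c => [m|n]; first by exists m, 0%N; rewrite subr0.
by exists 0%N, n.+1; rewrite NegzE sub0r.
Qed.

Lemma zpowgD x (c d : int) : zpowg (c + d)%R x = zpowg c x * zpowg d x.
Proof.
have [m1 [n1 ->]] := zpowg_rep c; have [m2 [n2 ->]] := zpowg_rep d.
have -> : ((m1%:Z - n1%:Z) + (m2%:Z - n2%:Z))%R = ((m1 + m2)%N%:Z - (n1 + n2)%N%:Z)%R.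
  by rewrite !PoszD; lia.
rewrite !zpowg_sub /P !expgnDr.
rewrite invgM.
have c1 : commute (x ^+ n1)^-1 (x ^+ m2) by apply/commute_sym/commuteV/cXX.
have c2 : commute (x ^+ n2)^-1 (x ^+ n1)^-1 by apply/commuteV/commute_sym/commuteV/cXX.
rewrite c2 !mulgA; congr (_ * _); rewrite -!mulgA; congr (_ * _).
by rewrite c1.
Qed.

End Alg.

Section Top.
Local Open Scope classical_set_scope.

Lemma mul_cont (T : topologicalType) (G : topGroupType) (f g : T -> G) :
  continuous f -> continuous g -> continuous (fun x => f x * g x).
Proof.
move=> cf cg x; apply: (@continuous2_cvg _ _ _ _ _ _ f g (fun a b => a * b)) => //.
  exact: (@mulg_continuous G (f x, g x)).
  exact: cf.
exact: cg.
Qed.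

Lemma fst_cont (X Y : topologicalType) : continuous (fun p : X * Y => p.1).
Proof. by move=> p; exact: cvg_fst. Qed.

Lemma expg_cont (G : topGroupType) n : continuous (fun x : G => x ^+ n).
Proof.
elim: n => [|n IH].
  have -> : (fun x : G => x ^+ 0) = (fun _ => 1) by [].
  exact: cst_continuous.
have -> : (fun x : G => x ^+ n.+1) = (fun x => x * x ^+ n).
  by apply: funext => x; rewrite expgS.
apply: (@mul_cont _ _ id) => // y; exact: cvg_id.
Qed.

Lemma powmap_cont (G : topGroupType) c : continuous (powmap c : G -> G).
Proof.
case: c => n /=; first exact: expg_cont.
move=> x; apply: (@continuous_comp _ _ _ (fun x : G => x ^+ n.+1) (fun y => y^-1)).
  exact: expg_cont.
exact: invg_continuous.
Qed.

Lemma homot_mul (X : topologicalType) (G : topGroupType) (U : set X)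
  (f g f' g' h : X -> G) : continuous h ->
  (forall x, f' x = f x * h x) -> (forall x, g' x = g x * h x) ->
  homotopic_on U f g -> homotopic_on U f' g'.
Proof.
move=> ch ef eg [H [cH eH]].
exists (fun p => H p * h p.1); split.
  have -> : from_subspace (U `*` unit_interval) (fun p => H p * h p.1) =
     (fun p => from_subspace (U `*` unit_interval) H p *
               from_subspace (U `*` unit_interval) (h \o fst) p) by [].
  apply: mul_cont => //; apply: continuous_subspaceT.
  by move=> p; apply: continuous_comp; [exact: fst_cont | exact: ch].
move=> x Ux; have [e0 e1] := eH x Ux; by rewrite ef eg e0 e1.
Qed.
End Top.

Lemma homot_iff (G : topGroupType) (a b : int) (U : set G) :
  homotopic_on U (powmap a : G -> G) (powmap b) <->
  homotopic_on U (powmap (a - b)%R : G -> G) (fun _ : G => (1 : G)%g).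
Proof.
split.
  apply: (@homot_mul _ _ _ _ _ _ _ (powmap (- b)%R)); first exact: powmap_cont.
    by move=> x; rewrite /powmap -zpowgD.
  by move=> x; rewrite /powmap -zpowgD GRing.subrr.
apply: (@homot_mul _ _ _ _ _ _ _ (powmap b)); first exact: powmap_cont.
  by move=> x; rewrite /powmap -zpowgD GRing.subrK.
by move=> x; rewrite mul1g.
Qed.

Lemma hdist_ext (X Y : topologicalType) (f g f' g' : X -> Y) :
  (forall n, hdist_le f g n <-> hdist_le f' g' n) -> hdist f g = hdist f' g'.
Proof.
move=> E; rewrite /hdist.
case: pselect => [H1|N1]; case: pselect => [H2|N2].
- congr Some.
  case: ex_minnP => m /asboolP Hm Hmin; case: ex_minnP => k /asboolP Hk Hkmin.
  apply/eqP; rewrite eqn_leq; apply/andP; split.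
    by apply: Hmin; apply/asboolP; apply/E.
  by apply: Hkmin; apply/asboolP; apply/E.
- by exfalso; apply: N2; case: H1 => n /E; exists n.
- by exfalso; apply: N1; case: H2 => n /E; exists n.
- by [].
Qed.

Theorem proposition4p4 (G : topGroupType) (a b : int) :
  hdist (powmap a : G -> G) (powmap b) =
  hdist (powmap (a - b)%R : G -> G) (fun _ : G => (1 : G)%g).
Proof.
apply: hdist_ext => n; split; move=> [U [oU [cU hU]]]; exists U; split => //; split => // j.
  exact/homot_iff.
exact/homot_iff.
Qed.
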